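(* Consider the network and the protocols described in the context. Let fairMAC$_0$ denote fairMAC with a finite maximum number of pending packets $P$ and with maximum number of forwarded packets per joint packet $Q=0$. Then the long-term throughput per node and the long-term bit-cost of every node under fairMAC$_0$ equal those of Direct Link: $$\mathsf{S}^{\mathrm{fair}_0}=\mathsf{S}^{\mathrm{direct}}\quad\text{and}\quad \mathsf{B}^{\mathrm{fair}_0}_k=\mathsf{B}^{\mathrm{direct}}_k\ \text{ for all } k=1,\dots,N.$$
   Context: Network model: $N$ nodes transmit data to a common access point (AP). For nodes $k,l$, $R_{kl}>0$ is the achievable rate (bit/s) from $k$ to $l$, and $R_k>0$ the rate from $k$ directly to the AP; rates are constant in time. Each packet carries 1 bit of data, so a transmission at rate $R$ lasts $1/R$. Node $h$ is the helper $h_k$ of node $k$ iff $h=\arg\min_{l}\bigl(1/R_{kl}+1/R_l\bigr)$ and $1/R_{kh}+1/R_h<1/R_k$; otherwise $k$ has no helper. All nodes transmit with the same power $\mathcal{E}$ while transmitting. All nodes are saturated (always have own data to send). Medium access is slotted CSMA with slot length $\sigma$ and transmit probability $\tau$: a node that senses an idle slot starts a transmission of an own packet in the next slot with probability $\tau$; a packet is lost (collision) iff another node transmits simultaneously; otherwise the receiver decodes it. Control headers and acknowledgments (ACKs) have negligible duration, are decodable by all nodes, and are never lost; the only packet losses are collisions. Direct Link: every node transmits each own packet directly to the AP at its rate; on success the AP sends an ACK; on collision the node retransmits the same packet later. fairMAC (parameters $P$, $Q$): a node $k$ with helper $h$ keeps a counter $p$ (pending packets, initially 0). While $p\le P$,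 $k$ sends its packet to $h$ at rate $R_{kh}$; if $h$ decodes it, $h$ appends it to an infinite forwarding queue, sends a ''preACK'' to $k$, and $k$ increases $p$ by one; once $p$ exceeds $P$, $k$ transmits its current packet directly to the AP. When a helper $h$ wins the medium it sends one joint packet at rate $R_h$ consisting of one own packet plus up to $Q$ packets from its forwarding queue; if no collision occurs the AP sends one ''jointACK'' to $h$ and to all nodes with data in the joint packet; $h$ removes these from its queue and each such source decreases $p$ by the number of its packets forwarded. Nodes without helper behave as in Direct Link. Throughput $\mathsf{S}_k$ of node $k$: long-term average number of own data bits of $k$ successfully delivered to the AP per unit time (forwarded data of others does not count). Average power $\bar{\mathcal{E}}_k$: $\mathcal{E}$ times the long-term fraction of time node $k$ transmits (including forwarding). Bit-cost $\mathsf{B}_k=\bar{\mathcal{E}}_k/\mathsf{S}_k$. All nodes have the same throughput, denoted $\mathsf{S}$. *)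

(* Defs.v *)
From HB Require Import structures.
From mathcomp Require Import all_boot all_order all_algebra.
From mathcomp Require Import all_classical all_reals all_analysis.
Set Implicit Arguments. Unset Strict Implicit. Unset Printing Implicit Defensive.
Import Order.TTheory GRing.Theory Num.Theory.
Import numFieldNormedType.Exports.
Local Open Scope classical_set_scope.
Local Open Scope ring_scope.

(* Nodes are 'I_N.  Rl k l = R_{kl} (rate k -> l), Ra k = R_k (rate k -> AP). *)

Definition is_helper_map (R : realType) (N : nat) (Rl : 'I_N -> 'I_N -> R)
    (Ra : 'I_N -> R) (helper : 'I_N -> option 'I_N) : Prop :=
  forall k : 'I_N,
  match helper k with
  | Some h => h != k
      /\ (forall l, l != k -> (Rl k h)^-1 + (Ra h)^-1 <= (Rl k l)^-1 + (Ra l)^-1)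
      /\ (Rl k h)^-1 + (Ra h)^-1 < (Ra k)^-1
  | None => forall l, l != k -> ~ ((Rl k l)^-1 + (Ra l)^-1 < (Ra k)^-1)
  end.

(* Round n
   consists of one idle slot of length sigma, after which the set A_n of
   nodes that decided to transmit start simultaneously; node k transmits
   for dur n k (0 if k does not transmit); the medium is busy until the
   longest of these transmissions ends.  bits n k = number of own data bits
   of node k delivered to the AP in round n (delivered at the end of the
   busy period, which for a successful round is the end of the unique
   transmission). *)

Definition busy (R : realType) (N : nat) (dur : nat -> 'I_N -> R) (n : nat) : R :=
  \big[Num.max/0]_(k < N) dur n k.

Definition round_start (R : realType) (N : nat) (sigma : R)
    (dur : nat -> 'I_N -> R) (n : nat) : R :=
  \sum_(i < n) (sigma + busy dur i).

(* every round lasts at least sigma, so rounds n >= rounds_by sigma t start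
   after time t *)
Definition rounds_by (R : realType) (sigma t : R) : nat :=
  (Num.truncn (t / sigma)).+1.

Definition delivered_by (R : realType) (N : nat) (sigma : R)
    (dur : nat -> 'I_N -> R) (bits : nat -> 'I_N -> nat) (k : 'I_N) (t : R) : R :=
  \sum_(n < rounds_by sigma t)
    (if round_start sigma dur n + sigma + busy dur n <= t
     then (bits n k)%:R else 0).

Definition txtime_by (R : realType) (N : nat) (sigma : R)
    (dur : nat -> 'I_N -> R) (k : 'I_N) (t : R) : R :=
  \sum_(n < rounds_by sigma t)
    Num.max 0 (Num.min (round_start sigma dur n + sigma + dur n k) t
               - (round_start sigma dur n + sigma)).

(* A protocol maps the sequence of attempt decisions (A n k = node k
   transmits in round n) to the per-round durations and delivered bits. *)
Definition protocol (R : realType) (N : nat) :=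
  (nat -> 'I_N -> bool) -> (nat -> 'I_N -> R) * (nat -> 'I_N -> nat).

Definition success (N : nat) (A : 'I_N -> bool) (k : 'I_N) : bool :=
  A k && [forall j, A j ==> (j == k)].

Definition direct (R : realType) (N : nat) (Ra : 'I_N -> R) : protocol R N :=
  fun A => (fun n k => if A n k then (Ra k)^-1 else 0,
            fun n k => nat_of_bool (success (A n) k)).

(* ---------- fairMAC(P, Q) ----------
   State: pending counters p and forwarding queues (FIFO sequences of the
   source nodes of the queued packets). *)
Definition fstate (N : nat) : Type := ('I_N -> nat) * ('I_N -> seq 'I_N).

Definition fstate0 (N : nat) : fstate N := (fun _ => 0%N, fun _ => [::]).

Definition to_helper (N : nat) (helper : 'I_N -> option 'I_N) (P : nat)
    (st : fstate N) (k : 'I_N) : option 'I_N :=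
  match helper k with
  | Some h => if (st.1 k <= P)%N then Some h else None
  | None => None
  end.

Definition nfwd (N : nat) (Q : nat) (st : fstate N) (k : 'I_N) : nat :=
  minn Q (size (st.2 k)).

Definition fdur (R : realType) (N : nat) (Rl : 'I_N -> 'I_N -> R) (Ra : 'I_N -> R)
    (helper : 'I_N -> option 'I_N) (P Q : nat) (st : fstate N)
    (A : 'I_N -> bool) (k : 'I_N) : R :=
  if A k then
    match to_helper helper P st k with
    | Some h => (Rl k h)^-1
    | None => (1 + (nfwd Q st k)%:R) / Ra k
    end
  else 0.

Definition fbits (N : nat) (helper : 'I_N -> option 'I_N) (P Q : nat)
    (st : fstate N) (A : 'I_N -> bool) (j : 'I_N) : nat :=
  \sum_(k < N)
    (if success A k && (to_helper helper P st k == None)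
     then ((j == k) + count_mem j (take (nfwd Q st k) (st.2 k)))%N
     else 0%N).

Definition fnext (N : nat) (helper : 'I_N -> option 'I_N) (P Q : nat)
    (st : fstate N) (A : 'I_N -> bool) : fstate N :=
  match [pick k | success A k] with
  | Some k =>
      match to_helper helper P st k with
      | Some h =>
          (fun j => if j == k then (st.1 j).+1 else st.1 j,
           fun j => if j == h then rcons (st.2 j) k else st.2 j)
      | None =>
          let f := take (nfwd Q st k) (st.2 k) in
          (fun j => (st.1 j - count_mem j f)%N,
           fun j => if j == k then drop (nfwd Q st k) (st.2 j) else st.2 j)
      end
  | None => st
  end.

Fixpoint fstate_at (N : nat) (helper : 'I_N -> option 'I_N) (P Q : nat)
    (A : nat -> 'I_N -> bool) (n : nat) : fstate N :=
  match n with
  | 0 => fstate0 N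
  | m.+1 => fnext helper P Q (fstate_at helper P Q A m) (A m)
  end.

Definition fairmac (R : realType) (N : nat) (Rl : 'I_N -> 'I_N -> R)
    (Ra : 'I_N -> R) (helper : 'I_N -> option 'I_N) (P Q : nat) : protocol R N :=
  fun A => (fun n k => fdur Rl Ra helper P Q (fstate_at helper P Q A n) (A n) k,
            fun n k => fbits helper P Q (fstate_at helper P Q A n) (A n) k).

(* ---------- Randomness ----------
   X n k w = node k decides to transmit in round n.  These are mutually
   independent Bernoulli(tau) events. *)
Definition bernoulli_attempts (R : realType) (N : nat) (d : measure_display)
    (T : measurableType d) (Pr : probability T R)
    (X : nat -> 'I_N -> T -> bool) (tau : R) : Prop :=
  (forall n k, measurable [set w | X n k w]) /\
  (forall s : seq (nat * 'I_N), uniq s ->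
     Pr (\big[setI/setT]_(i <- s) [set w | X i.1 i.2 w]) = (tau ^+ size s)%:E).

Definition throughput_is (R : realType) (N : nat) (d : measure_display)
    (T : measurableType d) (Pr : probability T R)
    (X : nat -> 'I_N -> T -> bool) (sigma : R) (proto : protocol R N)
    (k : 'I_N) (S : R) : Prop :=
  {ae Pr, forall w,
    let o := proto (fun n j => X n j w) in
    (delivered_by sigma o.1 o.2 k t / t) @[t --> +oo] --> S}.

Definition avg_power_is (R : realType) (N : nat) (d : measure_display)
    (T : measurableType d) (Pr : probability T R)
    (X : nat -> 'I_N -> T -> bool) (sigma En : R) (proto : protocol R N)
    (k : 'I_N) (Eb : R) : Prop :=
  {ae Pr, forall w,
    let o := proto (fun n j => X n j w) in
    (En * txtime_by sigma o.1 k t / t) @[t --> +oo] --> Eb}.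

Definition bitcost_is (R : realType) (N : nat) (d : measure_display)
    (T : measurableType d) (Pr : probability T R)
    (X : nat -> 'I_N -> T -> bool) (sigma En : R) (proto : protocol R N)
    (k : 'I_N) (B : R) : Prop :=
  exists Eb S, avg_power_is Pr X sigma En proto k Eb
            /\ throughput_is Pr X sigma proto k S /\ B = Eb / S.

(* Main.v *)
Require Import Defs.
From HB Require Import structures.
From mathcomp Require Import all_boot all_order all_algebra.
From mathcomp Require Import all_classical all_reals all_analysis.
From mathcomp Require Import ring lra.
Import Order.TTheory GRing.Theory Num.Theory.
Import numFieldNormedType.Exports.
Local Open Scope classical_set_scope.
Local Open Scope ring_scope.
Set Implicit Arguments. Unset Strict Implicit.


Definition litset (T : Type) (N : nat) (X : nat -> 'I_N -> T -> bool)
  (x : (nat * 'I_N) * bool) : set T := [set w | X x.1.1 x.1.2 w = x.2].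
Definition Lits (T : Type) (N : nat) (X : nat -> 'I_N -> T -> bool) s : set T :=
  \big[setI/setT]_(x <- s) litset X x.
Definition Pos (T : Type) (N : nat) (X : nat -> 'I_N -> T -> bool) (p : seq (nat * 'I_N)) : set T :=
  \big[setI/setT]_(i <- p) [set w | X i.1 i.2 w].
Definition wt (R : ringType) (N : nat) (tau : R) (s : seq ((nat * 'I_N) * bool)) : R :=
  \prod_(x <- s) (if x.2 then tau else 1 - tau).

Lemma litset_meas (R : realType) (N : nat) (d : measure_display)
    (T : measurableType d) (Pr : probability T R)
    (X : nat -> 'I_N -> T -> bool) tau :
  bernoulli_attempts Pr X tau -> forall x, measurable (litset X x).
Proof.
move=> [mX _] [[n k] b]; rewrite /litset /=; case: b; first exact: mX.
have -> : [set w | X n k w = false] = ~` [set w | X n k w].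
  by apply/seteqP; split => w /=; case: (X n k w).
exact/measurableC/mX.
Qed.

Lemma Lits_meas (R : realType) (N : nat) (d : measure_display)
    (T : measurableType d) (Pr : probability T R)
    (X : nat -> 'I_N -> T -> bool) tau :
  bernoulli_attempts Pr X tau -> forall s, measurable (Lits X s).
Proof.
move=> hb s; apply: bigsetI_measurable => x _; exact: (litset_meas hb).
Qed.

Lemma Pos_meas (R : realType) (N : nat) (d : measure_display)
    (T : measurableType d) (Pr : probability T R)
    (X : nat -> 'I_N -> T -> bool) tau :
  bernoulli_attempts Pr X tau -> forall p, measurable (Pos X p).
Proof.
move=> [mX _] p; apply: bigsetI_measurable => x _; exact: mX.
Qed.

Lemma prob_fin (R : realType) (d : measure_display)
    (T : measurableType d) (Pr : probability T R) (A : set T) :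
  measurable A -> (Pr A < +oo)%E.
Proof. by move=> mA; exact: (le_lt_trans (probability_le1 Pr mA) (ltry _)). Qed.

Lemma lits_prob (R : realType) (N : nat) (d : measure_display)
    (T : measurableType d) (Pr : probability T R)
    (X : nat -> 'I_N -> T -> bool) tau :
  bernoulli_attempts Pr X tau -> forall s p, uniq (p ++ map fst s) ->
  Pr (Pos X p `&` Lits X s) = (tau ^+ size p * wt tau s)%:E.
Proof.
move=> hb; elim=> [|[x b] s IH] p up.
  rewrite /Lits big_nil setIT /wt big_nil mulr1; rewrite cats0 in up.
  exact: hb.2.
have up' : uniq ((x :: p) ++ map fst s).
  by move: up; rewrite /= -[x :: map _ _]cat1s uniq_catCA.
have eP : Pos X (x :: p) = [set w | X x.1 x.2 w] `&` Pos X p.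
  by rewrite /Pos big_cons.
rewrite /Lits big_cons /wt big_cons /= -/(Lits X s) -/(wt tau s).
have up2 : uniq (p ++ map fst s) by case/andP: up'.
clear up; case: b.
  have -> : Pos X p `&` (litset X (x, true) `&` Lits X s) = Pos X (x :: p) `&` Lits X s.
    by rewrite setIA eP [[set w | _] `&` _]setIC.
  by rewrite IH //= exprS mulrA (mulrC tau).
have -> : Pos X p `&` (litset X (x, false) `&` Lits X s) =
   (Pos X p `&` Lits X s) `\` (Pos X (x :: p) `&` Lits X s).
  rewrite eP /litset; apply/seteqP; split => w /=.
    move=> [Hp [Hx Hs]]; split; first by split.
    by move=> [[Hx' _] _]; rewrite Hx in Hx'.
  move=> [[Hp Hs] Hn]; split => //; split => //.
  by apply/negbTE/negP => Hx; apply: Hn.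
rewrite measureD; [|exact: measurableI (Pos_meas hb _) (Lits_meas hb _)
  |exact: measurableI (Pos_meas hb _) (Lits_meas hb _)
  |idtac]; last first.
  exact: (@prob_fin _ _ _ Pr _ (measurableI _ _ (Pos_meas hb p) (Lits_meas hb s))).
have -> : (Pos X p `&` Lits X s) `&` (Pos X (x :: p) `&` Lits X s) = Pos X (x :: p) `&` Lits X s.
  rewrite eP; apply/seteqP; split => w /=; first by case => [[? ?] [[? ?] ?]].
  by case=>[[? ?] ?].
have h1 := IH p up2; have h2 := IH (x :: p) up'.
transitivity ((tau ^+ size p * wt tau s)%:E - (tau ^+ (size (x :: p)) * wt tau s)%:E)%E.
  by congr (_ - _)%E; [exact: h1 | exact: h2].
by rewrite -EFinB /= exprS; congr (_%:E); ring.
Qed.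

Definition succlits (N : nat) (k : 'I_N) (n : nat) : seq ((nat * 'I_N) * bool) :=
  [seq ((n, j), j == k) | j <- enum 'I_N].
Definition NW (T : Type) (N : nat) (X : nat -> 'I_N -> T -> bool) (k : 'I_N) (W : seq nat) : set T :=
  \big[setI/setT]_(n <- W) ~` Lits X (succlits k n).

Lemma wt_succ (R : ringType) (N : nat) (tau : R) (k : 'I_N) n :
  wt tau (succlits k n) = wt tau (succlits k 0).
Proof. by rewrite /wt /succlits !big_map. Qed.

Lemma NW_meas (R : realType) (N : nat) (d : measure_display)
    (T : measurableType d) (Pr : probability T R)
    (X : nat -> 'I_N -> T -> bool) tau :
  bernoulli_attempts Pr X tau -> forall k W, measurable (NW X k W).
Proof.
move=> hb k W; apply: bigsetI_measurable => n _; exact/measurableC/(Lits_meas hb).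
Qed.

Lemma keys_succ (N : nat) (k : 'I_N) n :
  map fst (succlits k n) = [seq (n, j) | j <- enum 'I_N].
Proof. by rewrite /succlits -map_comp. Qed.

Lemma window_prob (R : realType) (N : nat) (d : measure_display)
    (T : measurableType d) (Pr : probability T R)
    (X : nat -> 'I_N -> T -> bool) tau (k : 'I_N) :
  bernoulli_attempts Pr X tau -> forall W s, uniq W -> uniq (map fst s) ->
  (forall x, x \in map fst s -> x.1 \notin W) ->
  Pr (Lits X s `&` NW X k W) = (wt tau s * (1 - wt tau (succlits k 0)) ^+ size W)%:E.
Proof.
move=> hb; elim=> [|n W IH] s uW us ds.
  rewrite /NW big_nil setIT expr0 mulr1.
  have := lits_prob hb (p:=[::]) us; rewrite /Pos big_nil setTI expr0 mul1r; exact.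
have eL : Lits X (s ++ succlits k n) = Lits X s `&` Lits X (succlits k n).
  by rewrite /Lits big_cat.
have uW' : uniq W by case/andP: uW.
have nW : n \notin W by case/andP: uW.
have us' : uniq (map fst (s ++ succlits k n)).
  rewrite map_cat cat_uniq us keys_succ map_inj_uniq; last by move=> a b [].
  rewrite enum_uniq andbT; apply/hasPn => y /mapP [j _ ->]; apply/negP => hy.
  by have := ds _ hy; rewrite /= inE eqxx.
have ds' : forall x, x \in map fst (s ++ succlits k n) -> x.1 \notin W.
  move=> x; rewrite map_cat mem_cat => /orP [hx|].
    by have := ds _ hx; rewrite inE negb_or => /andP [].
  by rewrite keys_succ => /mapP [j _ ->].
have ds2 : forall x, x \in map fst s -> x.1 \notin W.
  by move=> x hx; have := ds _ hx; rewrite inE negb_or => /andP [].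
have -> : Lits X s `&` NW X k (n :: W) =
    (Lits X s `&` NW X k W) `\` (Lits X (s ++ succlits k n) `&` NW X k W).
  rewrite eL /NW big_cons; apply/seteqP; split => w /=.
    by move=> [Hs [Hn HW]]; split => // -[[_ ?] _].
  by move=> [[Hs HW] Hn]; split => //; split => // Hn'; apply: Hn.
rewrite measureD; [|exact: measurableI _ _ (Lits_meas hb _) (NW_meas hb _ _)
  |exact: measurableI _ _ (Lits_meas hb _) (NW_meas hb _ _)|]; last first.
  exact: (@prob_fin _ _ _ Pr _ (measurableI _ _ (Lits_meas hb s) (NW_meas hb k W))).
have -> : (Lits X s `&` NW X k W) `&` (Lits X (s ++ succlits k n) `&` NW X k W) =
    Lits X (s ++ succlits k n) `&` NW X k W.
  rewrite eL; apply/seteqP; split => w /=; first by case => [[? ?] [[? ?] ?]].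
  by case=>[[? ?] ?].
have h1 := IH s uW' us ds2; have h2 := IH _ uW' us' ds'.
transitivity ((wt tau s * (1 - wt tau (succlits k 0)) ^+ size W)%:E -
   (wt tau (s ++ succlits k n) * (1 - wt tau (succlits k 0)) ^+ size W)%:E)%E.
  by congr (_ - _)%E; [exact: h1 | exact: h2].
rewrite -EFinB /= exprS /wt big_cat /= -/(wt tau s) -/(wt tau (succlits k n)) wt_succ.
congr (_%:E); rewrite -/(wt tau (succlits k 0)); ring.
Qed.

Lemma wt_bounds (R : realType) (N : nat) (tau : R) (s : seq ((nat * 'I_N) * bool)) :
  0 < tau -> tau < 1 -> (0 < wt tau s) && (wt tau s <= 1).
Proof.
move=> t0 t1; elim: s => [|x s IH]; first by rewrite /wt big_nil ltr01 lexx.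
rewrite /wt big_cons -/(wt tau s); case/andP: IH => h0 h1.
case: x.2; apply/andP; split.
- exact: mulr_gt0.
- by rewrite -[1]mul1r ler_pM // ltW.
- by apply: mulr_gt0 => //; rewrite subr_gt0.
- by rewrite -[1]mul1r ler_pM // ?subr_ge0 ?ltW //; lra.
Qed.

Lemma bern_ineq (R : realType) (q : R) L :
  0 <= q -> q <= 1 -> (1 - q) ^+ L * (1 + q * L%:R) <= 1.
Proof.
move=> q0 q1; elim: L => [|L IH]; first by rewrite expr0 mulr0 addr0 mulr1.
have h : 0 <= (1 - q) ^+ L by apply: exprn_ge0; rewrite subr_ge0.
rewrite exprS -natr1.
move: IH h; set y := (1 - q) ^+ L; set l := (L%:R : R) => IH h.
have l0 : 0 <= l by rewrite /l ler0n.
have : 0 <= y * (q * q) * (l + 1) by rewrite !mulr_ge0 // addr_ge0.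
nra.
Qed.

Lemma geo_small (R : realType) (q a : R) :
  0 < q -> q <= 1 -> (forall L, a <= (1 - q) ^+ L) -> a <= 0.
Proof.
move=> q0 q1 H; rewrite leNgt; apply/negP => a0.
set L := (Num.truncn ((q * a)^-1)).+1.
have hL : (q * a)^-1 < L%:R by exact: truncnS_gt.
have hqa : 0 < q * a by exact: mulr_gt0.
have h1 : 1 < q * a * L%:R.
  by rewrite -(ltr_pdivrMl _ _ hqa) mulr1.
have h2 := bern_ineq L (ltW q0) q1.
have h3 := H L.
move: h1 h2 h3; set y := (1 - q) ^+ L; set l := (L%:R : R) => h1 h2 h3.
have l0 : 0 <= l by rewrite /l ler0n.
nra.
Qed.

Lemma bad_null (R : realType) (N : nat) (d : measure_display)
    (T : measurableType d) (Pr : probability T R)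
    (X : nat -> 'I_N -> T -> bool) tau (k : 'I_N) m :
  bernoulli_attempts Pr X tau -> 0 < tau -> tau < 1 ->
  Pr (\bigcap_L NW X k (iota m L)) = 0%E.
Proof.
move=> hb t0 t1.
have mB : measurable (\bigcap_L NW X k (iota m L)).
  by apply: bigcapT_measurable => L; exact: (NW_meas hb).
have hL : forall L, (Pr (\bigcap_L NW X k (iota m L)) <= ((1 - wt tau (succlits k 0)) ^+ L)%:E)%E.
  move=> L.
  have := @window_prob _ _ _ _ Pr X tau k hb (iota m L) [::] (iota_uniq _ _) isT (fun _ h => match notF h with end).
  rewrite /Lits big_nil setTI /wt big_nil mul1r size_iota => <-.
  apply: le_measure; rewrite ?inE //; first exact: (NW_meas hb).
  by apply: bigcap_inf.
have f : Pr (\bigcap_L NW X k (iota m L)) \is a fin_num.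
  by rewrite ge0_fin_numE ?measure_ge0 //; exact: prob_fin.
rewrite -(fineK f); congr (_%:E).
have := wt_bounds (succlits k 0) t0 t1; case/andP => q0 q1.
apply/le_anti/andP; split; last by rewrite fine_ge0 ?measure_ge0.
apply: (geo_small q0 q1) => L; rewrite -lee_fin fineK //; exact: hL.
Qed.


Lemma cvg_shift (R : realType) (f g : R -> R) (C K S : R) :
  (forall t, `|f t - g (t - C)| <= K) ->
  ((g t / t) @[t --> +oo] --> S) -> ((f t / t) @[t --> +oo] --> S).
Proof.
move=> hK /cvgrPdist_lt H; apply/cvgrPdist_lt => e e0.
have e4 : 0 < e / 4 by rewrite divr_gt0.
have [M [Mr HM]] := H _ e4.
have K0 : 0 <= K by apply: le_trans (hK 0).
exists (Num.max (M + C) (Num.max (`|C| + 1) (2 * (K + `|S| * `|C|) / e + 1))).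
split; first by rewrite num_real.
move=> t; rewrite !gt_max => /andP [h1 /andP [h2 h3]].
have t0 : 0 < t by apply: le_lt_trans h2; rewrite addr_ge0.
set u := t - C.
have nC := ler_norm C; have nC' : - C <= `|C| by rewrite -normrN ler_norm.
have u0 : 0 < u by rewrite /u; lra.
have hu : `|S - g u / u| < e / 4 by apply: HM; rewrite /u; lra.
have hg : `|g u - S * u| < e / 4 * u.
  have -> : g u - S * u = - (u * (S - g u / u)).
    by field; rewrite gt_eqF.
  by rewrite normrN normrM gtr0_norm // mulrC ltr_pM2r.
have h3' : 2 * (K + `|S| * `|C|) < e * t.
  have hz : 2 * (K + `|S| * `|C|) / e < t by lra.
  by rewrite ltr_pdivrMr // [t * e]mulrC in hz.
rewrite -(ltr_pM2r t0).
have -> : `|S - f t / t| * t = `|(S - f t / t) * t| by rewrite normrM (gtr0_norm t0).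
have -> : (S - f t / t) * t = - ((f t - g u) + (g u - S * u) + S * (u - t)).
  by rewrite /u; field; rewrite gt_eqF.
rewrite normrN.
have hC : `|S * (u - t)| = `|S| * `|C| by rewrite /u normrM; congr (_ * _); rewrite -normrN; congr `|_|; ring.
have hKt := hK t; rewrite -/u in hKt.
have hn := ler_normD (f t - g u + (g u - S * u)) (S * (u - t)).
have hn2 := ler_normD (f t - g u) (g u - S * u).
have hCle : `|C| < t by lra.
have hu2 : u <= 2 * t by rewrite /u; lra.
nra.
Qed.

Lemma busy_ge0 (R : realType) (N : nat) (dur : nat -> 'I_N -> R) n : 0 <= busy dur n.
Proof. by rewrite /busy; elim/big_rec: _ => // i x _ hx; rewrite le_max hx orbT. Qed.

Lemma rs_ge (R : realType) (N : nat) (sigma : R) (dur : nat -> 'I_N -> R) n :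
  n%:R * sigma <= round_start sigma dur n.
Proof.
elim: n => [|n IH]; first by rewrite /round_start big_ord0 mul0r.
rewrite /round_start big_ord_recr /= -/(round_start sigma dur n) -natr1 mulrDl mul1r.
by apply: lerD => //; rewrite lerDl busy_ge0.
Qed.

Lemma rounds_by_gt (R : realType) (sigma t : R) n :
  0 < sigma -> (rounds_by sigma t <= n)%N -> t < n%:R * sigma.
Proof.
move=> s0 h; have h1 := truncnS_gt (t / sigma).
have h2 : ((Num.truncn (t / sigma)).+1%:R : R) <= n%:R by rewrite ler_nat.
by rewrite -ltr_pdivrMr //; apply: lt_le_trans h1 h2.
Qed.

Lemma sum_ext (R : realType) (F : nat -> R) m M : (m <= M)%N ->
  (forall n, (m <= n)%N -> F n = 0) -> \sum_(n < m) F n = \sum_(n < M) F n.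
Proof.
move=> hm H; rewrite -!(big_mkord xpredT) (@big_cat_nat _ _ _ m 0 M xpredT F (leq0n m) hm) /=.
rewrite [X in _ + X]big1_seq ?addr0 // => i /andP [_].
by rewrite mem_index_iota => /andP [hi _]; exact: H.
Qed.

Lemma shift_sum (R : realType) (F1 F2 : nat -> R -> R) (M : R -> nat) (n0 : nat)
    (C : R) (Kb : nat -> R) :
  (forall t n, (M t <= n)%N -> F1 n t = 0) -> (forall t n, (M t <= n)%N -> F2 n t = 0) ->
  (forall n t, (n0 <= n)%N -> F1 n t = F2 n (t - C)) ->
  (forall n t, `|F1 n t - F2 n (t - C)| <= Kb n) ->
  forall t, `|\sum_(n < M t) F1 n t - \sum_(n < M (t - C)) F2 n (t - C)| <= \sum_(n < n0) Kb n.
Proof.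
move=> z1 z2 e b t.
set B := maxn (maxn (M t) (M (t - C))) n0.
rewrite (sum_ext (M := B) _ (z1 t)); last by rewrite /B !leq_max leqnn.
rewrite (sum_ext (M := B) _ (z2 (t - C))); last by rewrite /B !leq_max leqnn orbT.
have hB : (n0 <= B)%N by rewrite /B !leq_max leqnn !orbT.
rewrite -sumrB -(big_mkord (fun _ => true) (fun i => F1 i t - F2 i (t - C))) (@big_cat_nat _ _ _ n0 0 B xpredT _ (leq0n n0) hB) /=.
rewrite [X in _ + X]big1_seq ?addr0; last first.
  by move=> i /andP [_]; rewrite mem_index_iota => /andP [hi _]; rewrite e // subrr.
rewrite big_mkord; apply: le_trans (ler_norm_sum _ _ _) _.
by apply: ler_sum => i _.
Qed.

Lemma rs_S (R : realType) (N : nat) (sigma : R) (dur : nat -> 'I_N -> R) n :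
  round_start sigma dur n.+1 = round_start sigma dur n + (sigma + busy dur n).
Proof. by rewrite /round_start big_ord_recr. Qed.

Lemma rs_shift (R : realType) (N : nat) (sigma : R) (dur1 dur2 : nat -> 'I_N -> R) n0 :
  (forall n, (n0 <= n)%N -> busy dur1 n = busy dur2 n) ->
  forall n, (n0 <= n)%N -> round_start sigma dur1 n =
    round_start sigma dur2 n + (round_start sigma dur1 n0 - round_start sigma dur2 n0).
Proof.
move=> hb; elim=> [|n IH] h.
  by move: h; rewrite leqn0 => /eqP ->; ring.
case: (leqP n0 n) => h'.
  rewrite !rs_S IH // hb //; ring.
have -> : n0 = n.+1 by apply/eqP; rewrite eqn_leq h h'.
ring.
Qed.

Lemma delivered_shift (R : realType) (N : nat) (sigma : R) (dur1 dur2 : nat -> 'I_N -> R)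
    (bits1 bits2 : nat -> 'I_N -> nat) n0 k :
  0 < sigma ->
  (forall n, (n0 <= n)%N -> dur1 n = dur2 n) ->
  (forall n, (n0 <= n)%N -> bits1 n = bits2 n) ->
  forall t, `|delivered_by sigma dur1 bits1 k t -
     delivered_by sigma dur2 bits2 k (t - (round_start sigma dur1 n0 - round_start sigma dur2 n0))|
   <= \sum_(n < n0) ((bits1 n k)%:R + (bits2 n k)%:R).
Proof.
move=> s0 hd hbt.
have hb : forall n, (n0 <= n)%N -> busy dur1 n = busy dur2 n.
  by move=> n h; rewrite /busy hd.
set C := _ - _.
have hrs := rs_shift sigma hb.
have zero : forall (dur : nat -> 'I_N -> R) bits t n, (rounds_by sigma t <= n)%N ->
    (if round_start sigma dur n + sigma + busy dur n <= t then (bits n k)%:R else 0) = 0 :> R.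
  move=> dur bits t n h; have h1 := rounds_by_gt s0 h.
  have h2 := rs_ge sigma dur n; have h3 := busy_ge0 dur n.
  by case: ifP => // h4; exfalso; lra.
apply: (@shift_sum R
  (fun n t => if round_start sigma dur1 n + sigma + busy dur1 n <= t then (bits1 n k)%:R else 0)
  (fun n t => if round_start sigma dur2 n + sigma + busy dur2 n <= t then (bits2 n k)%:R else 0)
  (rounds_by sigma) n0 C (fun n => (bits1 n k)%:R + (bits2 n k)%:R)).
- by move=> t n h; exact: zero.
- by move=> t n h; exact: zero.
- move=> n t h; rewrite hrs // hb // hbt //.
  have -> : (round_start sigma dur2 n + C + sigma + busy dur2 n <= t) =
            (round_start sigma dur2 n + sigma + busy dur2 n <= t - C).
    by apply/idP/idP => H; lra.
  by [].
- move=> n t.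
  have g1 : 0 <= (bits1 n k)%:R :> R by rewrite ler0n.
  have g2 : 0 <= (bits2 n k)%:R :> R by rewrite ler0n.
  apply: le_trans (ler_normB _ _) _; apply: lerD; case: ifP => _;
    by rewrite ?normr0 ?ger0_norm.
Qed.

Lemma min_shift (R : realType) (x y t C : R) :
  Num.min (x + C) t - (y + C) = Num.min x (t - C) - y.
Proof.
have [h|h] := leP (x + C) t.
  have -> : Num.min x (t - C) = x by apply: min_l; lra.
  ring.
have -> : Num.min x (t - C) = t - C by apply: min_r; lra.
ring.
Qed.

Lemma ov_bound (R : realType) (a d t : R) :
  `|Num.max 0 (Num.min (a + d) t - a)| <= `|d|.
Proof.
have nd := ler_norm d; have n0 := normr_ge0 d.
have [h|h] := leP (a + d) t.
  have -> : a + d - a = d by ring.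
  have [h2|h2] := leP 0 d; first by [].
  by rewrite normr0.
have [h2|h2] := leP 0 (t - a).
  rewrite ger0_norm //; lra.
by rewrite normr0.
Qed.

Lemma txtime_shift (R : realType) (N : nat) (sigma : R) (dur1 dur2 : nat -> 'I_N -> R) n0 k :
  0 < sigma ->
  (forall n, (n0 <= n)%N -> dur1 n = dur2 n) ->
  forall t, `|txtime_by sigma dur1 k t -
     txtime_by sigma dur2 k (t - (round_start sigma dur1 n0 - round_start sigma dur2 n0))|
   <= \sum_(n < n0) (`|dur1 n k| + `|dur2 n k|).
Proof.
move=> s0 hd.
have hb : forall n, (n0 <= n)%N -> busy dur1 n = busy dur2 n.
  by move=> n h; rewrite /busy hd.
set C := _ - _.
have hrs := rs_shift sigma hb.
have zero : forall (dur : nat -> 'I_N -> R) t n, (rounds_by sigma t <= n)%N ->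
    Num.max 0 (Num.min (round_start sigma dur n + sigma + dur n k) t - (round_start sigma dur n + sigma)) = 0.
  move=> dur t n h; have h1 := rounds_by_gt s0 h.
  have h2 := rs_ge sigma dur n.
  have [h4|h4] := leP (round_start sigma dur n + sigma + dur n k) t; apply: max_l; lra.
apply: (@shift_sum R
  (fun n t => Num.max 0 (Num.min (round_start sigma dur1 n + sigma + dur1 n k) t - (round_start sigma dur1 n + sigma)))
  (fun n t => Num.max 0 (Num.min (round_start sigma dur2 n + sigma + dur2 n k) t - (round_start sigma dur2 n + sigma)))
  (rounds_by sigma) n0 C (fun n => `|dur1 n k| + `|dur2 n k|)).
- by move=> t n h; exact: zero.
- by move=> t n h; exact: zero.
- move=> n t h; rewrite hrs // hd //.
  have -> : round_start sigma dur2 n + C + sigma + dur2 n k = (round_start sigma dur2 n + sigma + dur2 n k) + C by ring.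
  have -> : round_start sigma dur2 n + C + sigma = (round_start sigma dur2 n + sigma) + C by ring.
  by rewrite min_shift.
- move=> n t.
  apply: le_trans (ler_normB _ _) _; apply: lerD.
    by have := ov_bound (round_start sigma dur1 n + sigma) (dur1 n k) t; rewrite -addrA.
  by have := ov_bound (round_start sigma dur2 n + sigma) (dur2 n k) (t - C); rewrite -addrA.
Qed.

Lemma cvg_shift_iff (R : realType) (f g : R -> R) (C K S : R) :
  (forall t, `|f t - g (t - C)| <= K) ->
  (((f t / t) @[t --> +oo] --> S) <-> ((g t / t) @[t --> +oo] --> S)).
Proof.
move=> H; split; last exact: cvg_shift H.
apply: (@cvg_shift _ g f (- C) K) => t.
have := H (t + C); rewrite distrC.
have -> : t + C - C = t by ring.
by have -> : t - - C = t + C by ring.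
Qed.


Lemma success_uniq (N : nat) (A : 'I_N -> bool) k k' :
  success A k -> success A k' -> k = k'.
Proof.
move=> /andP [_ /forallP h] /andP [hk' _].
by have := h k'; rewrite hk' /= => /eqP.
Qed.

Lemma fnext_mono (N : nat) (helper : 'I_N -> option 'I_N) (P : nat) st A j :
  (st.1 j <= (fnext helper P 0 st A).1 j)%N.
Proof.
rewrite /fnext; case: pickP => [k hk|//].
case: (to_helper helper P st k) => [h|] /=.
  by case: (j == k).
by rewrite /nfwd min0n take0 /= subn0.
Qed.

Lemma fnext_succ (N : nat) (helper : 'I_N -> option 'I_N) (P : nat) st A k h :
  success A k -> to_helper helper P st k = Some h ->
  (fnext helper P 0 st A).1 k = (st.1 k).+1.
Proof.
move=> hs hh; rewrite /fnext; case: pickP => [k' hk'|hn]; last by rewrite hn in hs.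
have <- := success_uniq hs hk'.
by rewrite hh /= eqxx.
Qed.

Lemma st_mono (N : nat) (helper : 'I_N -> option 'I_N) (P : nat) A j m n :
  (m <= n)%N -> ((fstate_at helper P 0 A m).1 j <= (fstate_at helper P 0 A n).1 j)%N.
Proof.
elim: n => [|n IH]; first by rewrite leqn0 => /eqP ->.
rewrite leq_eqVlt => /orP [/eqP -> //|h].
by apply: leq_trans (IH h) _; exact: fnext_mono.
Qed.

Lemma helper_off (N : nat) (helper : 'I_N -> option 'I_N) (P : nat) (A : nat -> 'I_N -> bool) :
  (forall k m, exists n, (m <= n)%N /\ success (A n) k) ->
  exists n0, forall n k, (n0 <= n)%N -> to_helper helper P (fstate_at helper P 0 A n) k = None.
Proof.
move=> H.
have hk : forall k, exists nk, forall n, (nk <= n)%N -> to_helper helper P (fstate_at helper P 0 A n) k = None.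
  move=> k; case hk: (helper k) => [h|]; last first.
    by exists 0%N => n _; rewrite /to_helper hk.
  have cl : forall c, (c <= P.+1)%N -> exists n, (c <= (fstate_at helper P 0 A n).1 k)%N.
    elim=> [|c IH] hc; first by exists 0%N.
    have [n hn] := IH (ltnW hc).
    have [n' [hn' hs]] := H k n.
    have hm := st_mono helper P A k hn'.
    case: (ltnP c ((fstate_at helper P 0 A n').1 k)) => h1; first by exists n'.
    exists n'.+1.
    have hth : to_helper helper P (fstate_at helper P 0 A n') k = Some h.
      rewrite /to_helper hk; case: ifP => // /negbT; rewrite -ltnNge => h2.
      by have := leq_trans h2 h1; rewrite leqNgt hc.
    by rewrite /= (fnext_succ hs hth) ltnS (leq_trans hn hm).
  have [n hn] := cl P.+1 (leqnn _).
  exists n => n' hn'; rewrite /to_helper hk.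
  have := leq_trans hn (st_mono helper P A k hn').
  by case: ifP => // h1 h2; have := leq_trans h2 h1; rewrite ltnn.
have [f hf] := choice hk.
exists (\max_k f k) => n k h; apply: hf.
exact: leq_trans (leq_bigmax k) h.
Qed.

Lemma fair_eq (R : realType) (N : nat) (Rl : 'I_N -> 'I_N -> R) (Ra : 'I_N -> R)
    (helper : 'I_N -> option 'I_N) (P : nat) (A : nat -> 'I_N -> bool) n0 :
  (forall n k, (n0 <= n)%N -> to_helper helper P (fstate_at helper P 0 A n) k = None) ->
  forall n, (n0 <= n)%N ->
    (fairmac Rl Ra helper P 0 A).1 n = (direct Ra A).1 n /\
    (fairmac Rl Ra helper P 0 A).2 n = (direct Ra A).2 n.
Proof.
move=> H n hn; split; apply: funext => k /=.
  rewrite /fdur; case: (A n k) => //; rewrite H // /nfwd min0n addr0 div1r.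
  by [].
rewrite /fbits (bigD1 k) //= big1 ?addn0.
  rewrite H // eqxx andbT /nfwd min0n take0 /= addn0.
  by rewrite eqxx; case: (success (A n) k).
move=> j hj; rewrite H // eqxx andbT; case: ifP => // _.
by rewrite /nfwd min0n take0 /= addn0 eq_sym (negbTE hj).
Qed.


Lemma mem_bigI (T : Type) (I : eqType) (r : seq I) (F : I -> set T) w :
  (\big[setI/setT]_(i <- r) F i) w <-> (forall i, i \in r -> F i w).
Proof.
elim: r => [|x r IH]; first by rewrite big_nil; split.
rewrite big_cons; split.
  by move=> [hx hr] i; rewrite inE => /orP [/eqP -> //|hi]; exact: (proj1 IH hr i hi).
move=> H; split; first by apply: H; rewrite inE eqxx.
by apply/IH => i hi; apply: H; rewrite inE hi orbT.
Qed.

Lemma mem_bigU (T : Type) (I : eqType) (r : seq I) (F : I -> set T) w i :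
  i \in r -> F i w -> (\big[setU/set0]_(i <- r) F i) w.
Proof.
elim: r => [//|x r IH]; rewrite inE big_cons => /orP [/eqP <- h|h h']; first by left.
by right; apply: IH.
Qed.

Lemma lits_succ (T : Type) (N : nat) (X : nat -> 'I_N -> T -> bool) k n w :
  Lits X (succlits k n) w <-> success (fun j => X n j w) k.
Proof.
rewrite /Lits /succlits big_map mem_bigI; split.
  move=> H; apply/andP; split; first by have := H k (mem_enum _ _); rewrite /litset /= eqxx => ->.
  by apply/forallP => j; apply/implyP => hj; have := H j (mem_enum _ _); rewrite /litset /= hj => <-.
move=> /andP [hk /forallP hf] j _; rewrite /litset /=.
case: eqP => [->//|/eqP hjk]; apply/negbTE/negP => hj.
by have := hf j; rewrite hj /= => /eqP h; rewrite h eqxx in hjk.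
Qed.

Lemma good_ae (R : realType) (N : nat) (d : measure_display)
    (T : measurableType d) (Pr : probability T R)
    (X : nat -> 'I_N -> T -> bool) tau :
  bernoulli_attempts Pr X tau -> 0 < tau -> tau < 1 ->
  Pr.-negligible (~` [set w | forall k m, exists n, (m <= n)%N /\ success (fun j => X n j w) k]).
Proof.
move=> hb t0 t1.
apply: (@negligibleS _ _ _ _ (\big[setU/set0]_(k <- enum 'I_N)
   \bigcup_m \bigcap_L NW X k (iota m L))).
  move=> w /= hw.
  have [k hk] : exists k, ~ (forall m, exists n, (m <= n)%N /\ success (fun j => X n j w) k).
    by apply/existsNP => hall; apply: hw.
  have [m hm] : exists m, ~ (exists n, (m <= n)%N /\ success (fun j => X n j w) k).
    by apply/existsNP.
  apply: (mem_bigU (i := k)); first by rewrite mem_enum.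
  exists m => //= L _; apply/mem_bigI => n hn /= hl.
  apply: hm; exists n; split; last exact/lits_succ.
  by move: hn; rewrite mem_iota => /andP [].
elim/big_ind: _ => //; first exact: negligible_set0.
  by move=> A B; exact: negligibleU.
move=> k _; apply: negligible_bigcup => m.
apply/negligibleP; last exact: (bad_null _ _ hb t0 t1).
by apply: bigcapT_measurable => L; exact: (NW_meas hb).
Qed.

Lemma det_equiv (R : realType) (N : nat) (Rl : 'I_N -> 'I_N -> R) (Ra : 'I_N -> R)
    (helper : 'I_N -> option 'I_N) (P : nat) (sigma En : R) (A : nat -> 'I_N -> bool) (k : 'I_N) :
  0 < sigma -> (forall k m, exists n, (m <= n)%N /\ success (A n) k) ->
  (forall S : R,
    ((delivered_by sigma (fairmac Rl Ra helper P 0 A).1 (fairmac Rl Ra helper P 0 A).2 k t / t)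
       @[t --> +oo] --> S) <->
    ((delivered_by sigma (direct Ra A).1 (direct Ra A).2 k t / t) @[t --> +oo] --> S)) /\
  (forall Eb : R,
    ((En * txtime_by sigma (fairmac Rl Ra helper P 0 A).1 k t / t) @[t --> +oo] --> Eb) <->
    ((En * txtime_by sigma (direct Ra A).1 k t / t) @[t --> +oo] --> Eb)).
Proof.
move=> s0 H.
have [n0 hn0] := helper_off helper P H.
have he := fair_eq Rl Ra hn0.
have hd : forall n, (n0 <= n)%N -> (fairmac Rl Ra helper P 0 A).1 n = (direct Ra A).1 n.
  by move=> n h; case: (he n h).
have hbt : forall n, (n0 <= n)%N -> (fairmac Rl Ra helper P 0 A).2 n = (direct Ra A).2 n.
  by move=> n h; case: (he n h).
split=> [S|Eb].
  exact: (cvg_shift_iff S (delivered_shift k s0 hd hbt)).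
apply: (@cvg_shift_iff _ (fun t => En * txtime_by sigma (fairmac Rl Ra helper P 0 A).1 k t)
   (fun t => En * txtime_by sigma (direct Ra A).1 k t) _ (`|En| * \sum_(n < n0)
     (`|(fairmac Rl Ra helper P 0 A).1 n k| + `|(direct Ra A).1 n k|)) Eb) => t.
rewrite -mulrBr normrM ler_wpM2l //.
exact: (txtime_shift k s0 hd).
Qed.

Lemma ae_transfer (R : realType) (d : measure_display)
    (T : measurableType d) (Pr : probability T R) (G : set T) (Pf Pd : T -> Prop) :
  Pr.-negligible (~` G) -> (forall w, G w -> (Pf w <-> Pd w)) ->
  {ae Pr, forall w, Pf w} -> {ae Pr, forall w, Pd w}.
Proof.
move=> hG H hf.
have hG' : {ae Pr, forall w, G w} by [].
apply: filterS2 hf hG' => w hPf hGw; exact/(H w hGw).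
Qed.

Local Close Scope classical_set_scope.
Unset Implicit Arguments.

Theorem proposition1 (R : realType) (N : nat) (d : measure_display)
    (T : measurableType d) (Pr : probability T R)
    (X : nat -> 'I_N -> T -> bool) (tau sigma En : R)
    (Rl : 'I_N -> 'I_N -> R) (Ra : 'I_N -> R)
    (helper : 'I_N -> option 'I_N) (P : nat) :
  0 < tau -> tau < 1 -> 0 < sigma -> 0 < En ->
  (forall k l, 0 < Rl k l) -> (forall k, 0 < Ra k) ->
  is_helper_map Rl Ra helper ->
  bernoulli_attempts Pr X tau ->
  (forall (k : 'I_N) (S : R),
     throughput_is Pr X sigma (fairmac Rl Ra helper P 0) k S <->
     throughput_is Pr X sigma (direct Ra) k S) /\
  (forall (k : 'I_N) (B : R),
     bitcost_is Pr X sigma En (fairmac Rl Ra helper P 0) k B <->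
     bitcost_is Pr X sigma En (direct Ra) k B).
Proof.
move=> t0 t1 s0 E0 _ _ _ hb.
have hG := good_ae hb t0 t1.
have DE := fun w k (hw : forall k m, exists n, (m <= n)%N /\ success (fun j => X n j w) k) =>
  @det_equiv R N Rl Ra helper P sigma En (fun n j => X n j w) k s0 hw.
have thr : forall k S, throughput_is Pr X sigma (fairmac Rl Ra helper P 0) k S <->
     throughput_is Pr X sigma (direct Ra) k S.
  move=> k S; rewrite /throughput_is; split.
    apply: (ae_transfer hG) => w hw; cbv zeta; exact ((DE w k hw).1 S).
  apply: (ae_transfer hG) => w hw; cbv zeta; exact (iff_sym ((DE w k hw).1 S)).
have pow : forall k Eb, avg_power_is Pr X sigma En (fairmac Rl Ra helper P 0) k Eb <->
     avg_power_is Pr X sigma En (direct Ra) k Eb.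
  move=> k Eb; rewrite /avg_power_is; split.
    apply: (ae_transfer hG) => w hw; cbv zeta; exact ((DE w k hw).2 Eb).
  apply: (ae_transfer hG) => w hw; cbv zeta; exact (iff_sym ((DE w k hw).2 Eb)).
split => // k B; split => -[Eb [S [h1 [h2 h3]]]]; exists Eb, S.
  by split; [apply/pow|split; [apply/thr|]].
by split; [apply/pow|split; [apply/thr|]].
Qed.
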